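(* For every $C>1$ and every natural number $L$ there is $n_0\in\mathbb N$ such that the following holds. Let $G=(V_1,V_2,E)$ be a $C$-bipartite-Ramsey graph with $|V_1|,|V_2|\ge n_0$, and put $\varepsilon_i:=(64C)^{-i}$ for $i\in[L]$. Then there are vertices $u_1,\ldots,u_L\in V_1$ such that for all $i\in[L]$, $$\Big|N(u_i)\setminus\bigcup_{j<i}N(u_j)\Big|\ge\varepsilon_i|V_2|\quad\text{and}\quad\Big|V_2\setminus\bigcup_{j\le i}N(u_j)\Big|\ge\varepsilon_i|V_2|.$$
   Context: A bipartite graph $G=(V_1,V_2,E)$ has vertex set $V_1\sqcup V_2$ and edge set $E\subset V_1\times V_2$; $N(u)$ is the neighbourhood of $u$. Given $C>0$, $G$ is called $C$-bipartite-Ramsey if for all integers $t_1\ge C\log_2|V_1|$ and $t_2\ge C\log_2|V_2|$ there are no $T_1\subset V_1$, $T_2\subset V_2$ with $|T_1|=t_1$, $|T_2|=t_2$ such that all pairs in $T_1\times T_2$ are edges, or all are non-edges. $[L]=\{1,\ldots,L\}$. *)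

(* Defs.v *)
From mathcomp Require Import all_boot.
From Stdlib Require Import Reals.
Set Implicit Arguments. Unset Strict Implicit. Unset Printing Implicit Defensive.

Definition log2 (x : R) : R := (ln x / ln 2)%R.

Definition nbhd (V1 V2 : finType) (E : V1 -> V2 -> bool) (u : V1) : {set V2} :=
  [set v | E u v].

Definition bip_ramsey (C : R) (V1 V2 : finType) (E : V1 -> V2 -> bool) : Prop :=
  forall (t1 t2 : nat),
    (C * log2 (INR #|V1|) <= INR t1)%R ->
    (C * log2 (INR #|V2|) <= INR t2)%R ->
    ~ (exists (T1 : {set V1}) (T2 : {set V2}),
          #|T1| = t1 /\ #|T2| = t2 /\
          ((forall x y, x \in T1 -> y \in T2 -> E x y) \/
           (forall x y, x \in T1 -> y \in T2 -> ~~ E x y))).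

(* Main.v *)
Require Import Defs.
From Stdlib Require Import Reals Lra ZArith Classical.
From mathcomp Require Import all_boot.
From mathcomp Require Import zify.
Set Implicit Arguments. Unset Strict Implicit. Unset Printing Implicit Defensive.

Lemma card_sep_sum (T : finType) (A : {set T}) (P : pred T) :
  #|[set x in A | P x]| = \sum_(x in A) (P x : nat).
Proof.
rewrite -sum1_card big_mkcond /= [RHS]big_mkcond /=.
by apply: eq_bigr => x _; rewrite !inE; case: (x \in A); case: (P x).
Qed.

Lemma greedy (T W : finType) (F : T -> W -> bool) (X : {set T}) (Y : {set W}) q t :
  0 < q -> (forall x, x \in X -> 2 * q * #|[set y in Y | F x y]| <= #|Y|) ->
  2 * t <= #|Y| ->
  exists S : {set W}, [/\ S \subset Y, #|S| = t &
    exists X' : {set T}, [/\ X' \subset X,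
      (forall x y, x \in X' -> y \in S -> ~~ F x y) &
      (q - 1) ^ t * #|X| <= q ^ t * #|X'|]].
Proof.
move=> q0 hdeg; elim: t => [|t IH] ht.
  exists set0; split; rewrite ?sub0set ?cards0 //.
  exists X; split=> // x y _; by rewrite inE.
have [S [sSY cS [X' [sX' hX' hcard]]]] := IH ltac:(lia).
set Yt := Y :\: S.
have cYt : #|Yt| = #|Y| - t by rewrite cardsDS // cS.
have : [exists y in Yt, q * #|[set x in X' | F x y]| <= #|X'|].
  apply: contraT => /existsPn hall; exfalso.
  have h1 : \sum_(y in Yt) (#|X'|.+1) <= \sum_(y in Yt) q * #|[set x in X' | F x y]|.
    apply: leq_sum => y yY; have := hall y; rewrite yY /= => /negbTE.
    by rewrite leqNgt => /negbFE.
  rewrite sum_nat_const -big_distrr /= in h1.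
  have h2 : \sum_(y in Yt) #|[set x in X' | F x y]| <= \sum_(x in X') #|[set y in Y | F x y]|.
    under eq_bigr do rewrite card_sep_sum.
    rewrite exchange_big /=; apply: leq_sum => x xX.
    rewrite -card_sep_sum; apply: subset_leq_card; apply/subsetP => y.
    by rewrite !inE => /andP [/andP [_ ->] ->].
  have h3 : \sum_(x in X') (2 * q * #|[set y in Y | F x y]|) <= \sum_(x in X') #|Y|.
    by apply: leq_sum => x xX; apply: hdeg; apply: (subsetP sX').
  rewrite sum_nat_const -big_distrr /= in h3.
  move: h1 h2 h3; set s1 := \sum_(y in Yt) _; set s2 := \sum_(x in X') _.
  move=> h1 h2 h3.
  have : 2 * q * s1 <= 2 * q * s2 by rewrite leq_mul2l h2 orbT.
  nia.
case/existsP => y /andP [yYt hy].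
set D := [set x in X' | F x y].
have sD : D \subset X' by apply/subsetP => x; rewrite inE => /andP [].
exists (y |: S); split.
- rewrite subUset sub1set sSY andbT; move: yYt; rewrite inE => /andP [].
  by move=> _ ->.
- move: yYt; rewrite inE => /andP [yS _]; by rewrite cardsU1 yS cS.
exists (X' :\: D); split.
- by apply: subset_trans sX'; apply: subsetDl.
- move=> x z; rewrite inE => /andP [xD xX'] ; rewrite in_setU1 => /orP [/eqP -> | zS].
    by move: xD; rewrite inE xX' /=.
  by apply: hX'.
rewrite cardsDS // !expnS.
have hD : #|D| <= #|X'| by apply: subset_leq_card.
move: hy hcard hD; rewrite -/D.
set a := (q - 1) ^ t; set b := q ^ t; set d := #|D|; set x' := #|X'|; set x := #|X|.
move=> hy hcard hD.
have e : q * (x' - d) = q * x' - q * d by rewrite mulnBr.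
rewrite (mulnC q b) -mulnA.
have f : (q - 1) * x' <= q * (x' - d) by rewrite e; nia.
have g := leq_mul (leqnn b) f.
move: g; move: (q * (x' - d)) => z g.
have : (q - 1) * a * x <= (q - 1) * (b * x') by rewrite -mulnA leq_mul2l hcard orbT.
nia.
Qed.
Lemma bern q m : m <= q -> q ^ m * (q - m) <= q * (q - 1) ^ m.
Proof.
elim: m => [|m IH] hm; first by rewrite !expn0 mul1n muln1 subn0.
have := IH (ltnW hm); rewrite !expnS.
move: (q ^ m) ((q - 1) ^ m) => A B h.
have q0 : 0 < q by lia.
suff : q * (A * (q - m.+1)) <= q * ((q - 1) * B) by rewrite leq_pmul2l //; nia.
have : (q - 1) * (A * (q - m)) <= (q - 1) * (q * B) by rewrite leq_mul2l h orbT.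
nia.
Qed.
Lemma block k s : 0 < k ->
  (16 * k) ^ (8 * k * s.+1) <= 2 ^ s.+1 * (16 * k - 1) ^ (8 * k * s.+1).
Proof.
move=> k0.
have h := bern (m := 8 * k) (q := 16 * k) ltac:(lia).
have h2 : (16 * k) ^ (8 * k) <= 2 * (16 * k - 1) ^ (8 * k).
  have e : 16 * k - 8 * k = 8 * k by lia.
  rewrite e in h; move: h; move: ((16 * k) ^ (8 * k)) ((16 * k - 1) ^ (8 * k)) => A B h.
  nia.
rewrite (expnM (16 * k)) (expnM (16 * k - 1)) -expnMn leq_exp2r //.
Qed.
Lemma subset_card (T : finType) (A : {set T}) k :
  k <= #|A| -> exists2 B : {set T}, B \subset A & #|B| = k.
Proof.
elim: k => [|k IH] hk.
  by exists set0; rewrite ?sub0set ?cards0.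
have [B sBA cB] := IH (ltnW hk).
have : 0 < #|A :\: B| by rewrite cardsDS // cB subn_gt0.
rewrite card_gt0 => /set0Pn [x]; rewrite inE => /andP [xB xA].
exists (x |: B); first by rewrite subUset sub1set xA sBA.
by rewrite cardsU1 xB cB.
Qed.

Lemma core (V1 V2 : finType) (F : V1 -> V2 -> bool) (A : {set V1}) (U : {set V2}) k s1 s2 :
  0 < k ->
  (forall a, a \in A -> 64 * k * #|[set v in U | F a v]| <= #|U|) ->
  ((2 * (8 * k * s2.+1) <= #|U| /\ 2 ^ s2.+1 * (8 * k * s1.+1) <= #|A|) \/
   (2 * (8 * k * s1.+1) <= #|A| /\ 2 ^ s1.+1 * (2 * (8 * k * s2.+1)) <= #|U|)) ->
  exists T1 : {set V1}, exists T2 : {set V2},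
    [/\ #|T1| = 8 * k * s1.+1, #|T2| = 8 * k * s2.+1 &
        forall x y, x \in T1 -> y \in T2 -> ~~ F x y].
Proof.
move=> k0 hdeg [[hU hA] | [hA hU]].
- have hdeg' : forall a, a \in A -> 2 * (16 * k) * #|[set v in U | F a v]| <= #|U|.
    by move=> a aA; have := hdeg a aA; lia.
  have [S [sSU cS [X' [sX' hX' hc]]]] := greedy (q := 16 * k) (t := 8 * k * s2.+1) ltac:(lia) hdeg' hU.
  have hb := block s2 k0.
  have : 8 * k * s1.+1 <= #|X'|.
    move: hb hc hA; set P := (16 * k) ^ _; set Q := (16 * k - 1) ^ _; set R := 2 ^ _.
    have P0 : 0 < P by rewrite expn_gt0; lia.
    move: P0; move: P Q R (#|X'|) (#|A|) (8 * k * s1.+1) => P Q R x a t P0 hb hc hA.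
    have h1 : P * t <= R * Q * t by rewrite leq_mul2r hb orbT.
    have h2 : Q * (R * t) <= Q * a by rewrite leq_mul2l hA orbT.
    have : P * t <= P * x by nia.
    by rewrite leq_pmul2l.
  case/subset_card => T1 sT1 cT1.
  exists T1, S; split=> // x y xT yS; apply: hX' => //; exact: (subsetP sT1).
- set Us := [set v in U | 32 * k * #|[set a in A | F a v]| <= #|A|].
  have hUs : #|U| <= 2 * #|Us|.
    have dc : \sum_(v in U) #|[set a in A | F a v]| = \sum_(a in A) #|[set v in U | F a v]|.
      under eq_bigr do rewrite card_sep_sum.
      rewrite exchange_big /=; apply: eq_bigr => a _; by rewrite card_sep_sum.
    have h3 : \sum_(a in A) (64 * k * #|[set v in U | F a v]|) <= \sum_(a in A) #|U|.
      by apply: leq_sum => a aA; apply: hdeg.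
    rewrite sum_nat_const -big_distrr /= -dc in h3.
    rewrite (big_setID Us) /= in h3.
    set Bad := U :\: Us in h3.
    have h4 : \sum_(v in Bad) (#|A|.+1) <= \sum_(v in Bad) (32 * k * #|[set a in A | F a v]|).
      apply: leq_sum => v; rewrite !inE => /andP [hv vU]; rewrite vU /= -ltnNge in hv; exact: hv.
    rewrite sum_nat_const -big_distrr /= in h4.
    have cU : #|U| = #|U :&: Us| + #|Bad| by rewrite cardsID.
    have sUs : #|U :&: Us| <= #|Us| by apply: subset_leq_card; apply: subsetIr.
    move: h3 h4 cU sUs.
    move: (\sum_(i in U :&: Us) _) (\sum_(i in Bad) _) (#|Bad|) (#|U :&: Us|) (#|Us|) (#|A|) (#|U|) => s b nb ni nus na nu.
    nia.
  have hdeg' : forall v, v \in Us -> 2 * (16 * k) * #|[set a in A | (fun v a => F a v) v a]| <= #|A|.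
    by move=> v; rewrite inE => /andP [_ h]; lia.
  have [S [sSA cS [X' [sX' hX' hc]]]] := greedy (q := 16 * k) (t := 8 * k * s1.+1) ltac:(lia) hdeg' hA.
  have hb := block s1 k0.
  have : 8 * k * s2.+1 <= #|X'|.
    move: hb hc hU hUs; set P := (16 * k) ^ _; set Q := (16 * k - 1) ^ _; set R := 2 ^ _.
    have P0 : 0 < P by rewrite expn_gt0; lia.
    move: P0; move: P Q R (#|X'|) (#|Us|) (#|U|) (8 * k * s2.+1) => P Q R x us u t P0 hb hc hU hUs.
    have h1 : P * (2 * t) <= R * Q * (2 * t) by rewrite leq_mul2r hb orbT.
    have h2 : Q * (R * (2 * t)) <= Q * u by rewrite leq_mul2l hU orbT.
    have h3 : Q * u <= Q * (2 * us) by rewrite leq_mul2l hUs orbT.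
    have : P * t <= P * x by nia.
    by rewrite leq_pmul2l.
  case/subset_card => T2 sT2 cT2.
  exists S, T2; split=> // x y xS yT.
  exact: (hX' y x (subsetP sT2 y yT) xS).
Qed.
Lemma growth K s : K <= s -> K * s.+1 <= 8 ^ s.
Proof.
move=> hK.
have h1 : s.+1 <= 2 ^ s by apply: ltn_expl.
have h2 : s < 4 ^ s by apply: ltn_expl.
have -> : 8 = 4 * 2 by [].
rewrite expnMn; apply: leq_mul => //; lia.
Qed.

Lemma numeric k M s1 s2 a u n1 n2 : 0 < k -> 0 < M ->
  32 * k * M <= s1 -> 32 * k * M <= s2 ->
  16 ^ s1 <= n1 -> n1 <= 2 * a -> 16 ^ s2 <= n2 -> n2 <= M * u ->
  ((2 * (8 * k * s2.+1) <= u /\ 2 ^ s2.+1 * (8 * k * s1.+1) <= a) \/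
   (2 * (8 * k * s1.+1) <= a /\ 2 ^ s1.+1 * (2 * (8 * k * s2.+1)) <= u)).
Proof.
move=> k0 M0 hs1 hs2 hn1 ha hn2 hu.
have g1 := growth hs1; have g2 := growth hs2.
have e1 : 16 ^ s1 = 2 ^ s1 * 8 ^ s1 by rewrite -expnMn.
have e2 : 16 ^ s2 = 2 ^ s2 * 8 ^ s2 by rewrite -expnMn.
have p1 : 0 < 2 ^ s1 by rewrite expn_gt0.
have p2 : 0 < 2 ^ s2 by rewrite expn_gt0.
rewrite !expnS.
case: (leqP s2 s1) => hs.
- left.
  have h22 : 2 ^ s2 <= 2 ^ s1 by rewrite leq_pexp2l.
  split.
  + have : M * (16 * k * s2.+1) <= M * u.
      apply: leq_trans hu; apply: leq_trans hn2; rewrite e2.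
      move: g2 p2; move: (8 ^ s2) (2 ^ s2) => X Y g2 p2; nia.
    rewrite leq_pmul2l //; lia.
  + move: g1 e1 h22; move: (8 ^ s1) (2 ^ s1) (2 ^ s2) => X Y Z g1 e1 h22.
    nia.
- right.
  have h22 : 2 ^ s1 <= 2 ^ s2 by rewrite leq_pexp2l // ltnW.
  split.
  + have hh : 32 * k * s1.+1 <= 32 * k * M * s1.+1 by rewrite leq_mul2r leq_pmulr ?orbT //; lia.
    move: g1 e1 p1; move: (8 ^ s1) (2 ^ s1) => X Y g1 e1 p1; nia.
  + have : M * (2 * 2 ^ s1 * (2 * (8 * k * s2.+1))) <= M * u.
      apply: leq_trans hu; apply: leq_trans hn2; rewrite e2.
      move: g2 h22; move: (8 ^ s2) (2 ^ s1) (2 ^ s2) => X Y Z g2 h22.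
      nia.
    by rewrite leq_pmul2l.
Qed.

Local Open Scope R_scope.
Lemma INRM m n : INR (m * n)%N = INR m * INR n.
Proof. exact: mult_INR. Qed.
Lemma INRX a m : INR (a ^ m)%N = INR a ^ m.
Proof.
elim: m => [|m IH]; first by rewrite expn0.
by rewrite expnS INRM IH.
Qed.
Lemma INR_leq m n : (m <= n)%N -> (INR m <= INR n).
Proof. by move/leP; apply: le_INR. Qed.
Lemma INR_leq_inv m n : (INR m <= INR n) -> (m <= n)%N.
Proof. by move/INR_le/leP. Qed.

Lemma ramsey_bound (C : R) k n s : (0 < k)%N -> (INR k <= C) -> (C < INR k + 1) ->
  (0 < n)%N -> (n < 16 ^ s.+1)%N -> (C * log2 (INR n) <= INR (8 * k * s.+1)).
Proof.
move=> k0 hk hC n0 hn.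
have l2 : (0 < ln 2) by rewrite -ln_1; apply: ln_increasing; lra.
have x1 : (1 <= INR n) by apply: (INR_leq (m := 1)).
have hk1 : (1 <= INR k) by apply: (INR_leq (m := 1)).
have h16 : (INR n < 2 ^ (4 * s.+1)).
  have : (n < 2 ^ (4 * s.+1))%N by rewrite expnM.
  move/ltP/lt_INR; by rewrite INRX.
have hl : (ln (INR n) < INR (4 * s.+1) * ln 2).
  rewrite -ln_pow; last lra.
  apply: ln_increasing; lra.
have lg0 : (0 <= log2 (INR n)).
  rewrite /log2; apply: Rmult_le_pos; last by left; apply: Rinv_0_lt_compat.
  case: (Rle_lt_or_eq_dec _ _ x1) => h.
    by left; rewrite -ln_1; apply: ln_increasing; lra.
  by rewrite -h ln_1; lra.
have lg : (log2 (INR n) <= INR (4 * s.+1)).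
  rewrite /log2; apply: (Rmult_le_reg_r (ln 2)) => //.
  rewrite /Rdiv Rmult_assoc Rinv_l; lra.
rewrite (INRM (8 * k)) INRM; rewrite INRM in lg.
have e8 : INR 8 = 8%R by simpl; lra.
have e4 : INR 4 = 4%R by simpl; lra.
rewrite e8; rewrite e4 in lg.
have hS : (0 <= INR s.+1) by apply: pos_INR.
nra.
Qed.

Lemma floor_nat (C : R) : (1 < C) -> exists k, [/\ (0 < k)%N, (INR k <= C) & (C < INR k + 1)].
Proof.
move=> hC.
have [h1 h2] := archimed C.
have z0 : (0 <= up C - 1)%Z.
  apply: le_IZR; rewrite minus_IZR; simpl; lra.
exists (Z.to_nat (up C - 1)).
have e : INR (Z.to_nat (up C - 1)) = (IZR (up C) - 1).
  by rewrite INR_IZR_INZ Z2Nat.id // minus_IZR.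
rewrite e; split; try lra.
apply/ltP; apply: INR_lt; rewrite e; simpl; lra.
Qed.

Lemma ceil_nat (x : R) : exists M, (0 < M)%N /\ (x <= INR M).
Proof.
have [h1 h2] := archimed x.
case: (Z_lt_le_dec (up x) 1) => hz.
  exists 1%N; split => //; simpl.
  have : (IZR (up x) <= 0) by apply: IZR_le; lia.
  lra.
exists (Z.to_nat (up x)); split.
  have e := Z2Nat.id (up x) ltac:(lia); move: e; move: (Z.to_nat (up x)) => nn e; apply/ltP; lia.
rewrite INR_IZR_INZ Z2Nat.id; [lra | lia].
Qed.

Lemma small_deg (C e : R) k x y : INR k <= C -> INR x < e -> 64 * C * e <= INR y ->
  (64 * k * x <= y)%N.
Proof.
move=> hk hx he; apply: INR_leq_inv; rewrite !INRM.
have e64 : INR 64 = 64 by simpl; lra.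
have := pos_INR x; have := pos_INR k; rewrite e64 => p1 p2.
nra.
Qed.

Lemma step (V1 V2 : finType) (E : V1 -> V2 -> bool) (C : R) (k M : nat) (U : {set V2}) (e : R) :
  bip_ramsey C E -> (0 < k)%N -> INR k <= C -> C < INR k + 1 -> (0 < M)%N ->
  (16 ^ (32 * k * M) <= #|V1|)%N -> (16 ^ (32 * k * M) <= #|V2|)%N ->
  (#|V2| <= M * #|U|)%N -> 64 * C * e <= INR #|U| ->
  exists u, e <= INR #|nbhd E u :&: U| /\ e <= INR #|U :\: nbhd E u|.
Proof.
move=> HR k0 hk hC M0 hn1 hn2 hU he.
case: (classic (exists u, e <= INR #|nbhd E u :&: U| /\ e <= INR #|U :\: nbhd E u|)) => // h.
exfalso.
have eq1 : forall u, [set v in U | E u v] = nbhd E u :&: U.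
  by move=> u; apply/setP => v; rewrite !inE andbC.
have eq2 : forall u, [set v in U | ~~ E u v] = U :\: nbhd E u.
  by move=> u; apply/setP => v; rewrite !inE andbC.
have hall : forall u, (64 * k * #|[set v in U | E u v]| <= #|U|)%N \/
                      (64 * k * #|[set v in U | ~~ E u v]| <= #|U|)%N.
  move=> u; rewrite eq1 eq2.
  case: (Rle_or_lt e (INR #|nbhd E u :&: U|)) => h1.
    case: (Rle_or_lt e (INR #|U :\: nbhd E u|)) => h2.
      by exfalso; apply: h; exists u.
    by right; apply: (small_deg hk h2 he).
  by left; apply: (small_deg hk h1 he).
set K := (32 * k * M)%N in hn1 hn2.
have p16 : (0 < 16 ^ K)%N by rewrite expn_gt0.
have n10' : (0 < #|V1|)%N by apply: leq_trans p16 hn1.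
have n20 : (0 < #|V2|)%N by apply: leq_trans p16 hn2.
set s1 := trunc_log 16 #|V1|.
set s2 := trunc_log 16 #|V2|.
have hs1 : (K <= s1)%N by apply: trunc_log_max.
have hs2 : (K <= s2)%N by apply: trunc_log_max.
have l1 : (16 ^ s1 <= #|V1|)%N by apply: trunc_logP.
have l2 : (16 ^ s2 <= #|V2|)%N by apply: trunc_logP.
have u1 : (#|V1| < 16 ^ s1.+1)%N by apply: trunc_log_ltn.
have u2 : (#|V2| < 16 ^ s2.+1)%N by apply: trunc_log_ltn.
have r1 := ramsey_bound k0 hk hC n10' u1.
have r2 := ramsey_bound k0 hk hC n20 u2.
set A := [set u | (64 * k * #|[set v in U | E u v]| <= #|U|)%N].
have cA : (#|A| + #|~: A| = #|V1|)%N by rewrite cardsC.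
case: (leqP #|V1| (2 * #|A|)) => hA.
- have hnum := numeric k0 M0 hs1 hs2 l1 hA l2 hU.
  have hdeg : forall a, a \in A -> (64 * k * #|[set v in U | E a v]| <= #|U|)%N.
    by move=> a; rewrite inE.
  have [T1 [T2 [c1 c2 hT]]] := core k0 hdeg hnum.
  apply: (HR _ _ r1 r2); exists T1, T2; split => //; split => //.
  by right.
- have hA' : (#|V1| <= 2 * #|~: A|)%N by lia.
  have hnum := numeric k0 M0 hs1 hs2 l1 hA' l2 hU.
  have hdeg : forall a, a \in ~: A -> (64 * k * #|[set v in U | (fun a v => ~~ E a v) a v]| <= #|U|)%N.
    move=> a; rewrite inE [a \in A]inE => /negP hna.
    by case: (hall a) => // /hna.
  have [T1 [T2 [c1 c2 hT]]] := core k0 hdeg hnum.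
  apply: (HR _ _ r1 r2); exists T1, T2; split => //; split => //.
  by left => x y xT yT; have := hT x y xT yT; rewrite negbK.
Qed.

Definition cov (V1 V2 : finType) (E : V1 -> V2 -> bool) (f : nat -> V1) (i : nat) : {set V2} :=
  \bigcup_(j < i) nbhd E (f j).

Lemma cov_ext (V1 V2 : finType) (E : V1 -> V2 -> bool) f g i :
  (forall j, (j < i)%N -> f j = g j) -> cov E f i = cov E g i.
Proof. by move=> h; apply: eq_bigr => j _; rewrite h // ltn_ord. Qed.

Lemma cov_S (V1 V2 : finType) (E : V1 -> V2 -> bool) f i :
  cov E f i.+1 = cov E f i :|: nbhd E (f i).
Proof. by rewrite /cov big_ord_recr. Qed.

Lemma cov_0 (V1 V2 : finType) (E : V1 -> V2 -> bool) f : cov E f 0 = set0.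
Proof. by rewrite /cov big_ord0. Qed.

Lemma conv_lt (V1 V2 : finType) (E : V1 -> V2 -> bool) f L (i : 'I_L) :
  \bigcup_(j : 'I_L | ltn j i) nbhd E (f (nat_of_ord j)) = cov E f i.
Proof.
apply/setP => v; apply/bigcupP/bigcupP => [[j hj hv] | [j _ hv]].
  by exists (Ordinal hj).
by exists (Ordinal (ltn_trans (ltn_ord j) (ltn_ord i))) => //=.
Qed.

Lemma conv_le (V1 V2 : finType) (E : V1 -> V2 -> bool) f L (i : 'I_L) :
  \bigcup_(j : 'I_L | leq j i) nbhd E (f (nat_of_ord j)) = cov E f i.+1.
Proof.
apply/setP => v; apply/bigcupP/bigcupP => [[j hj hv] | [j _ hv]].
  by exists (Ordinal (hj : (j < i.+1)%N)).
by exists (Ordinal (leq_trans (ltn_ord j) (ltn_ord i))) => //=; rewrite -ltnS ltn_ord.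
Qed.

Close Scope R_scope.

(* Index i : 'I_L stands for i+1 in [L]; eps_{i+1} = (64C)^{-(i+1)}. *)
Theorem lemma2p3 :
  forall (C : R), Rlt 1 C -> forall L : nat,
  exists n0 : nat,
  forall (V1 V2 : finType) (E : V1 -> V2 -> bool),
    bip_ramsey C E -> leq n0 #|V1| -> leq n0 #|V2| ->
    exists u : 'I_L -> V1,
      forall i : 'I_L,
        Rle (Rmult (Rinv (pow (Rmult 64 C) i.+1)) (INR #|V2|))
            (INR #|nbhd E (u i) :\: \bigcup_(j : 'I_L | ltn j i) nbhd E (u j)|) /\
        Rle (Rmult (Rinv (pow (Rmult 64 C) i.+1)) (INR #|V2|))
            (INR #|~: \bigcup_(j : 'I_L | leq j i) nbhd E (u j)|).
Proof.
move=> C hC L.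
have [k [k0 hk hCk]] := floor_nat hC.
have [M [M0 hM]] := ceil_nat (pow (Rmult 64 C) L).
exists (16 ^ (32 * k * M))%N => V1 V2 E HR hn1 hn2.
have hx : Rlt 1 (Rmult 64 C) by lra.
have hpos : forall j, Rlt 0 (pow (Rmult 64 C) j) by move=> j; apply: pow_lt; lra.
have [x0 _] : exists x0 : V1, x0 \in [set: V1].
  apply/card_gt0P; rewrite cardsT; apply: leq_trans hn1; by rewrite expn_gt0.
pose c1 f i := Rle (Rmult (Rinv (pow (Rmult 64 C) i.+1)) (INR #|V2|))
                   (INR #|nbhd E (f i) :\: cov E f i|).
pose c2 f i := Rle (Rmult (Rinv (pow (Rmult 64 C) i.+1)) (INR #|V2|))
                   (INR #|~: cov E f i.+1|).
have claim : forall m, (m <= L)%N -> exists f : nat -> V1,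
    forall i, (i < m)%N -> c1 f i /\ c2 f i.
  elim => [|m IH] hm.
    by exists (fun _ => x0).
  have [f hf] := IH (ltnW hm).
  set U := ~: cov E f m.
  have hU : Rle (Rmult (Rinv (pow (Rmult 64 C) m)) (INR #|V2|)) (INR #|U|).
    case: m {IH} hm hf @U => [|m] hm hf U.
      rewrite /U cov_0 setC0 cardsT /= Rinv_1; lra.
    by case: (hf m (ltnSn m)).
  have hUM : (#|V2| <= M * #|U|)%N.
    apply: INR_leq_inv; rewrite INRM.
    have hpm : Rle (pow (Rmult 64 C) m) (pow (Rmult 64 C) L).
      apply: Rle_pow; [lra | apply/leP; exact: ltnW].
    have hp := hpos m.
    have : Rle (INR #|V2|) (Rmult (pow (Rmult 64 C) m) (INR #|U|)).
      apply: (Rmult_le_reg_l (Rinv (pow (Rmult 64 C) m))); first by apply: Rinv_0_lt_compat.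
      rewrite -Rmult_assoc Rinv_l; last lra.
      by rewrite Rmult_1_l.
    have := pos_INR #|U|; nra.
  have he : Rle (Rmult (Rmult 64 C) (Rmult (Rinv (pow (Rmult 64 C) m.+1)) (INR #|V2|))) (INR #|U|).
    rewrite -Rmult_assoc /= Rinv_mult -Rmult_assoc Rinv_r; last lra.
    by rewrite Rmult_1_l.
  have [u [hu1 hu2]] := step HR k0 hk hCk M0 hn1 hn2 hUM he.
  exists (fun j => if j == m then u else f j) => i hi.
  have ext : forall b, (b <= m)%N -> cov E (fun j => if j == m then u else f j) b = cov E f b.
    move=> b hb; apply: cov_ext => j hj.
    have : j != m by rewrite neq_ltn (leq_trans hj hb).
    by move/negbTE => ->.
  case: (ltngtP i m) => him.
  - rewrite /c1 /c2 ext ?(ltnW him) // ext // /= (ltn_eqF him).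
    exact: hf.
  - by move: hi; rewrite ltnS leqNgt him.
  - rewrite him /c1 /c2 eqxx cov_S ext //.
    split.
      by rewrite setDE; exact: hu1.
    by rewrite eqxx setCU -setDE; exact: hu2.
have [f hf] := claim L (leqnn L).
exists (fun i => f (nat_of_ord i)) => i.
rewrite (conv_lt E f i) (conv_le E f i).
exact: hf.
Qed.
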